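(* Let $k>1$ and let $\mathcal{F}_1,\ldots,\mathcal{F}_{k-1}$ be families of finite hypergraphs. Let $\mathcal{F}=\{\mathcal{H}_1\cup\cdots\cup\mathcal{H}_{k-1} : \mathcal{H}_i\in\mathcal{F}_i \text{ for all } i\}$, where the union is taken over hypergraphs $\mathcal{H}_1,\ldots,\mathcal{H}_{k-1}$ on a common vertex set. If $m_k(\mathcal{F}_1),\ldots,m_k(\mathcal{F}_{k-1})<\infty$, then $\chi_{\rm big}(\mathcal{F})\le k$.
   Context: A hypergraph $\mathcal{H}=(V,E)$ consists of a vertex set $V$ and a nonempty family $E$ of nonempty subsets of $V$ (edges). The union of hypergraphs $\mathcal{H}_1,\ldots,\mathcal{H}_{k-1}$ on a common vertex set $V$ is the hypergraph on $V$ whose edge set is the union of their edge sets. A hypergraph is $m$-heavy if all its edges have at least $m$ vertices. A $k$-coloring is a map $V\to\{1,\ldots,k\}$; it is proper if every edge with at least two vertices contains two vertices of different colors, and polychromatic if every edge contains vertices of all $k$ colors. For a family $\mathcal{F}$ of hypergraphs, $m_k(\mathcal{F})$ is the smallest $m$ such that every $m$-heavy hypergraph in $\mathcal{F}$ has a polychromatic $k$-coloring ($\infty$ if none exists), and $\chi_{\rm big}(\mathcal{F})$ is the smallest integer $k$ for which there exists an integer $m$ such that every $m$-heavy hypergraph in $\mathcal{F}$ has a proper $k$-coloring ($\infty$ if no such $k$ exists). *)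

(* Defs.v *)
From mathcomp Require Import all_boot.
Set Implicit Arguments. Unset Strict Implicit. Unset Printing Implicit Defensive.

Record hypergraph := Hypergraph { hV : finType; hE : {set {set hV}} }.

Definition is_hypergraph (H : hypergraph) : Prop :=
  hE H != set0 /\ forall e, e \in hE H -> e != set0.

Definition hfamily := hypergraph -> Prop.

Definition family_of_hypergraphs (F : hfamily) : Prop :=
  forall H, F H -> is_hypergraph H.

Definition heavy (m : nat) (H : hypergraph) : Prop :=
  forall e, e \in hE H -> m <= #|e|.

Definition proper_coloring (k : nat) (H : hypergraph) (c : hV H -> 'I_k) : Prop :=
  forall e, e \in hE H -> 2 <= #|e| ->
    exists x, exists y, [/\ x \in e, y \in e & c x != c y].

Definition polychromatic (k : nat) (H : hypergraph) (c : hV H -> 'I_k) : Prop :=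
  forall e, e \in hE H -> forall j : 'I_k, exists2 x, x \in e & c x = j.

(* "m_k(F) <= m": every m-heavy hypergraph in F has a polychromatic k-coloring. *)
Definition mk_le (k : nat) (F : hfamily) (m : nat) : Prop :=
  forall H, F H -> heavy m H -> exists c : hV H -> 'I_k, polychromatic c.

Definition mk_finite (k : nat) (F : hfamily) : Prop := exists m, mk_le k F m.

Definition big_colorable (k : nat) (F : hfamily) : Prop :=
  exists m, forall H, F H -> heavy m H -> exists c : hV H -> 'I_k, proper_coloring c.

(* chi_big(F) <= k : the smallest admissible integer exists and is <= k. *)
Definition chi_big_le (F : hfamily) (k : nat) : Prop :=
  exists2 k', k' <= k & big_colorable k' F.

Definition union_family (n : nat) (Fs : 'I_n -> hfamily) : hfamily :=
  fun H => exists Es : 'I_n -> {set {set hV H}},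
    (forall i, Fs i (@Hypergraph (hV H) (Es i))) /\ hE H = \bigcup_(i < n) Es i.

(* Main.v *)
Require Import Defs.
From mathcomp Require Import all_boot.
From Stdlib Require Import ClassicalEpsilon.

Lemma mk_le_mono k F m M : mk_le k F m -> m <= M -> mk_le k F M.
Proof.
move=> H lemM G FG hG; apply: H => // e he; exact: leq_trans lemM (hG e he).
Qed.

Lemma miss_color k n (s : seq 'I_k) : size s = n -> n < k -> exists j : 'I_k, j \notin s.
Proof.
move=> sz lt; case: (pickP (fun j : 'I_k => j \notin s)) => [j Hj|H0]; first by exists j.
have : #|'I_k| <= #|s|.
  apply: subset_leq_card; apply/subsetP => j _; by move: (H0 j) => /= /negbFE.
by rewrite card_ord => /leq_trans/(_ (card_size s)); rewrite sz leqNgt lt.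
Qed.

Theorem corollary1 (k : nat) (Fs : 'I_k.-1 -> hfamily) :
  1 < k ->
  (forall i, family_of_hypergraphs (Fs i)) ->
  (forall i, mk_finite k (Fs i)) ->
  chi_big_le (union_family Fs) k.
Proof.
move=> k1 _ Hfin.
pose m i := proj1_sig (constructive_indefinite_description _ (Hfin i)).
have Hm i : mk_le k (Fs i) (m i) := proj2_sig (constructive_indefinite_description _ (Hfin i)).
exists k => //; exists (\max_(i < k.-1) m i) => H [Es [HF HE]] hH.
have Hc i : exists c : hV H -> 'I_k, @polychromatic k (@Hypergraph (hV H) (Es i)) c.
  apply: (@mk_le_mono _ _ _ _ (Hm i) (leq_bigmax (F := m) i) _ (HF i)) => /= e he.
  by apply: hH; rewrite HE; apply/bigcupP; exists i.
pose cs i := proj1_sig (constructive_indefinite_description _ (Hc i)).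
have Hcs i : @polychromatic k (@Hypergraph (hV H) (Es i)) (cs i)
  := proj2_sig (constructive_indefinite_description _ (Hc i)).
have Hv v : exists j : 'I_k, j \notin [seq cs i v | i <- enum 'I_k.-1].
  apply: (@miss_color _ k.-1); first by rewrite size_map size_enum_ord.
  by rewrite prednK // ltnW.
pose c v := proj1_sig (constructive_indefinite_description _ (Hv v)).
have Hcv v : c v \notin [seq cs i v | i <- enum 'I_k.-1]
  := proj2_sig (constructive_indefinite_description _ (Hv v)).
exists c => e; rewrite HE => /bigcupP [i _ he] e2.
have [y ye] : exists y, y \in e.
  by apply/set0Pn; rewrite -card_gt0; apply: leq_trans e2.
have [x xe cx] := Hcs i e he (c y).
exists x, y; split => //; rewrite -cx; apply/negP => /eqP cxx.
by move: (Hcv x); rewrite cxx; case/negP; apply/mapP; exists i; rewrite ?mem_enum.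
Qed.
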